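(* The class $\mathcal{S}_d$ is not closed under asymptotic equivalence: there exist density functions $p_1,p_2$ on $\mathbb{R}$ and a constant $c>0$ such that $p_1\in\mathcal{S}_d$, $p_2\notin\mathcal{S}_d$, and $p_2(x)\sim c\,p_1(x)$.
   Context: For positive functions $f,g$ defined on some $[a,\infty)$, $f(x)\sim g(x)$ means $\lim_{x\to\infty}f(x)/g(x)=1$. A density function is a measurable $g:\mathbb{R}\to[0,\infty)$ with $\int_{-\infty}^{\infty} g=1$. For integrable $f,g$, $f\otimes g(x):=\int_{-\infty}^{\infty} f(x-u)g(u)\,du$. The class $\mathbf{L}$ consists of nonnegative measurable $g$ on $\mathbb{R}$ with $g(x)>0$ for all sufficiently large $x$ and $g(x+a)\sim g(x)$ for every $a\in\mathbb{R}$. $\mathcal{L}_d$ is the set of density functions in $\mathbf{L}$; $\mathcal{S}_d$ is the set of $g\in\mathcal{L}_d$ with $g\otimes g(x)\sim 2g(x)$. A class $\mathcal{C}$ of density functions is closed under asymptotic equivalence if $p_1\in\mathcal{C}$, $p_2$ a density function, and $p_2(x)\sim c\,p_1(x)$ for some $c>0$ imply $p_2\in\mathcal{C}$. *)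

(* Defs.v *)
From Stdlib Require Import Reals Lra.
Open Scope R_scope.

Definition asym_equiv (f g : R -> R) : Prop :=
  forall eps, 0 < eps -> exists M, forall x, M <= x -> Rabs (f x / g x - 1) < eps.

Definition loc_RI (f : R -> R) : Prop :=
  forall a b, a <= b -> inhabited (Riemann_integrable f a b).

Definition has_integral (f : R -> R) (l : R) : Prop :=
  loc_RI f /\
  forall eps, 0 < eps -> exists M, forall a b, a <= -M -> M <= b ->
    forall pr : Riemann_integrable f a b, Rabs (RiemannInt pr - l) < eps.

(* Density function (nonnegative, integral 1). Measurability is rendered by
   local Riemann integrability. *)
Definition density (g : R -> R) : Prop :=
  (forall x, 0 <= g x) /\ has_integral g 1.

Definition classL (g : R -> R) : Prop :=
  (forall x, 0 <= g x) /\
  (exists X, forall x, X <= x -> 0 < g x) /\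
  (forall a, asym_equiv (fun x => g (x + a)) g).

Definition Ld (g : R -> R) : Prop := density g /\ classL g.

Definition conv_sq_asym (g : R -> R) : Prop :=
  exists X (h : R -> R),
    (forall x, X <= x -> has_integral (fun u => g (x - u) * g u) (h x)) /\
    asym_equiv h (fun x => 2 * g x).

Definition Sd (g : R -> R) : Prop := Ld g /\ conv_sq_asym g.

(* Main.v *)
Require Import Defs.
From Stdlib Require Import Reals Lra Classical.
From Coquelicot Require Import Coquelicot.
Open Scope R_scope.


Definition ee := exp 1.
Definition G (y : R) := (3 + sin (32 * ln (ln y))) * ln y.
Definition F (y : R) := exp (- G y).

Lemma ln_le_sub1 z : 0 < z -> ln z <= z - 1.
Proof. intro Hz. pose proof (exp_ineq1_le (ln z)). rewrite exp_ln in H; lra. Qed.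

Lemma ln_diff_le y1 y2 : 0 < y1 -> y1 <= y2 -> ln y2 - ln y1 <= (y2 - y1) / y1.
Proof.
  intros H1 H2.
  assert (ln y2 - ln y1 = ln (y2 / y1)).
  { unfold Rdiv. rewrite ln_mult, ln_Rinv; try lra. apply Rinv_0_lt_compat; lra. }
  rewrite H. replace ((y2 - y1)/y1) with (y2/y1 - 1) by (field; lra).
  apply ln_le_sub1. apply Rdiv_lt_0_compat; lra.
Qed.

Lemma sin_lip a b : Rabs (sin a - sin b) <= Rabs (a - b).
Proof.
  destruct (Req_dec a b) as [->|Hne].
  { replace (sin b - sin b) with 0 by ring. rewrite Rabs_R0. apply Rabs_pos. }
  assert (H : forall a b, a < b -> Rabs (sin b - sin a) <= Rabs (b - a)).
  { clear. intros a b Hab.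
    destruct (MVT_cor2 sin cos a b Hab) as [c [Hc _]].
    { intros c _. apply derivable_pt_lim_sin. }
    rewrite Hc, Rabs_mult. pose proof (COS_bound c).
    assert (Rabs (cos c) <= 1) by (apply Rabs_le; lra).
    pose proof (Rabs_pos (b - a)). nra. }
  destruct (Rlt_or_le a b) as [Hl|Hl].
  - rewrite Rabs_minus_sym, (Rabs_minus_sym a b). apply H; lra.
  - apply H; lra.
Qed.

Lemma ln_ee : ln ee = 1.
Proof. unfold ee. apply ln_exp. Qed.

Lemma ee_gt : 2 < ee.
Proof. unfold ee. pose proof (exp_ineq1 1). lra. Qed.

Lemma G_diff y1 y2 : ee <= y1 -> y1 <= y2 ->
  Rabs (G y2 - G y1) <= (4 + 32 * (1 + (ln y2 - ln y1))) * (ln y2 - ln y1).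
Proof.
  intros H1 H2.
  pose proof ee_gt.
  assert (Hl1 : 1 <= ln y1) by (rewrite <- ln_ee; apply ln_le; lra).
  assert (Hl2 : ln y1 <= ln y2) by (apply ln_le; lra).
  set (l1 := ln y1) in *. set (l2 := ln y2) in *.
  set (D := l2 - l1).
  assert (HL : ln l2 - ln l1 <= D / l1).
  { apply ln_diff_le; lra. }
  assert (HL0 : 0 <= ln l2 - ln l1).
  { assert (ln l1 <= ln l2) by (apply ln_le; lra). lra. }
  unfold G. fold l1 l2.
  set (p1 := sin (32 * ln l1)). set (p2 := sin (32 * ln l2)).
  assert (Hp : Rabs (p2 - p1) <= 32 * (ln l2 - ln l1)).
  { unfold p1, p2. eapply Rle_trans. apply sin_lip.
    replace (32 * ln l2 - 32 * ln l1) with (32 * (ln l2 - ln l1)) by ring.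
    rewrite Rabs_mult, Rabs_pos_eq, Rabs_pos_eq; lra. }
  assert (Hb : Rabs (3 + p1) <= 4).
  { pose proof (SIN_bound (32 * ln l1)). fold p1 in H0. apply Rabs_le; lra. }
  replace ((3 + p2) * l2 - (3 + p1) * l1) with ((3 + p1) * D + (p2 - p1) * l2)
    by (unfold D; ring).
  eapply Rle_trans. apply Rabs_triang.
  rewrite !Rabs_mult.
  assert (HD : 0 <= D) by (unfold D; lra).
  rewrite (Rabs_pos_eq D HD). rewrite (Rabs_pos_eq l2) by lra.
  assert (Rabs (p2 - p1) * l2 <= 32 * D * (1 + D)).
  { assert (Rabs (p2 - p1) <= 32 * (D / l1)) by lra.
    assert (Hq: 32 * (D / l1) * l2 = 32 * D * (1 + D / l1)) by (unfold D; field; lra).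
    assert (D / l1 <= D).
    { unfold Rdiv. rewrite <- (Rmult_1_r D) at 2. apply Rmult_le_compat_l; auto.
      rewrite <- Rinv_1. apply Rinv_le_contravar; lra. }
    pose proof (Rabs_pos (p2 - p1)).
    apply Rle_trans with (32 * (D / l1) * l2). apply Rmult_le_compat_r; lra.
    rewrite Hq. apply Rmult_le_compat_l; lra. }
  nra.
Qed.


Lemma F_pos y : 0 < F y.
Proof. unfold F. apply exp_pos. Qed.

Lemma exp_le x y : x <= y -> exp x <= exp y.
Proof. intro H. destruct (Rle_lt_or_eq_dec _ _ H). left; apply exp_increasing; auto. subst; lra. Qed.

Lemma exp_small B : 0 <= B <= /2 -> exp B <= 1 + 2 * B.
Proof.
  intros HB. pose proof (exp_ineq1_le (-B)).
  assert (exp B = / exp (- B)) by (rewrite exp_Ropp, Rinv_inv; auto).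
  rewrite H0.
  assert (0 < 1 - B) by lra.
  apply Rle_trans with (/ (1 - B)).
  apply Rinv_le_contravar; lra.
  apply (Rmult_le_reg_l (1 - B)); auto. rewrite Rinv_r by lra. nra.
Qed.

Lemma exp_ge B : 1 - B <= exp (- B).
Proof. pose proof (exp_ineq1_le (-B)). lra. Qed.

Lemma F_rat y1 y2 B : ee <= y1 -> y1 <= y2 ->
  (4 + 32 * (1 + (ln y2 - ln y1))) * (ln y2 - ln y1) <= B ->
  F y1 <= exp B * F y2 /\ F y2 <= exp B * F y1.
Proof.
  intros H1 H2 H3. pose proof (G_diff y1 y2 H1 H2).
  assert (HG: Rabs (G y2 - G y1) <= B) by lra.
  apply Rabs_le_between in HG.
  unfold F. rewrite <- !exp_plus. split; apply exp_le; lra.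
Qed.

Lemma F_near y1 y2 eta : ee <= y1 -> y1 <= y2 -> y2 - y1 <= eta * y1 -> 0 <= eta <= /136 ->
  (1 - 136 * eta) * F y1 <= F y2 <= (1 + 136 * eta) * F y1 /\
  (1 - 136 * eta) * F y2 <= F y1 <= (1 + 136 * eta) * F y2.
Proof.
  intros H1 H2 H3 H4. pose proof ee_gt.
  assert (HD : ln y2 - ln y1 <= eta).
  { eapply Rle_trans. apply ln_diff_le; lra.
    apply (Rmult_le_reg_l y1). lra. unfold Rdiv. rewrite Rmult_comm, Rmult_assoc, Rinv_l; lra. }
  assert (HD0 : 0 <= ln y2 - ln y1) by (assert (ln y1 <= ln y2) by (apply ln_le; lra); lra).
  assert (HB : (4 + 32 * (1 + (ln y2 - ln y1))) * (ln y2 - ln y1) <= 68 * eta) by nra.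
  destruct (F_rat y1 y2 (68 * eta) H1 H2 HB) as [Ha Hb].
  pose proof (exp_small (68 * eta)) as Hs. pose proof (exp_ge (68 * eta)) as Hg.
  assert (Hm : exp (68 * eta) * exp (- (68 * eta)) = 1) by (rewrite <- exp_plus; replace (68 * eta + - (68 * eta)) with 0 by ring; apply exp_0).
  pose proof (F_pos y1). pose proof (F_pos y2).
  assert (exp (68 * eta) <= 1 + 136 * eta) by (apply Rle_trans with (1 + 2 * (68 * eta)); [apply Hs; lra | lra]).
  assert (F y2 >= exp (- (68 * eta)) * F y1).
  { apply Rle_ge. apply Rle_trans with (exp (- (68 * eta)) * (exp (68 * eta) * F y2)).
    apply Rmult_le_compat_l. left; apply exp_pos. auto.
    rewrite <- Rmult_assoc, (Rmult_comm (exp _)), Hm. lra. }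
  assert (F y1 >= exp (- (68 * eta)) * F y2).
  { apply Rle_ge. apply Rle_trans with (exp (- (68 * eta)) * (exp (68 * eta) * F y1)).
    apply Rmult_le_compat_l. left; apply exp_pos. auto.
    rewrite <- Rmult_assoc, (Rmult_comm (exp _)), Hm. lra. }
  repeat split; nra.
Qed.

Lemma F_unif eps A : 0 < eps -> 0 <= A -> exists X, 0 <= X /\
  forall x t, X <= x -> Rabs t <= A ->
  (1 - eps) * F (x + ee) <= F (x + t + ee) <= (1 + eps) * F (x + ee).
Proof.
  intros He HA. set (eta := Rmin (/136) (eps / 136)).
  assert (Heta0 : 0 < eta) by (unfold eta; apply Rmin_glb_lt; lra).
  assert (Heta1 : eta <= /136) by apply Rmin_l.
  assert (Heta2 : eta <= eps / 136) by apply Rmin_r.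
  exists (A + A / eta + 1). split.
  { assert (0 <= A / eta) by (apply Rdiv_le_0_compat; lra). lra. }
  intros x t Hx Ht. pose proof ee_gt.
  assert (HAe : 0 <= A / eta) by (apply Rdiv_le_0_compat; lra).
  assert (Hkey : forall y1, A / eta + 1 <= y1 -> A <= eta * y1).
  { intros y1 Hy. apply Rle_trans with (eta * (A / eta)).
    right; field; lra. apply Rmult_le_compat_l; lra. }
  apply Rabs_le_between in Ht.
  destruct (Rle_or_lt 0 t) as [Ht0|Ht0].
  - destruct (F_near (x + ee) (x + t + ee) eta) as [[Ha Hb] _]; try lra.
    apply Rle_trans with A; [lra|]. apply Hkey; lra.
    split; [apply Rle_trans with ((1 - 136 * eta) * F (x + ee)) | apply Rle_trans with ((1 + 136 * eta) * F (x + ee))]; auto;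
    apply Rmult_le_compat_r; try (left; apply F_pos); lra.
  - destruct (F_near (x + t + ee) (x + ee) eta) as [_ [Ha Hb]]; try lra.
    apply Rle_trans with A; [lra|]. apply Hkey; lra.
    split; [apply Rle_trans with ((1 - 136 * eta) * F (x + ee)) | apply Rle_trans with ((1 + 136 * eta) * F (x + ee))]; auto;
    apply Rmult_le_compat_r; try (left; apply F_pos); lra.
Qed.

Lemma F_dom y1 y2 : ee <= y1 -> y1 <= y2 -> y2 <= 2 * y1 -> F y1 <= exp 68 * F y2.
Proof.
  intros H1 H2 H3. pose proof ee_gt.
  assert (HD : ln y2 - ln y1 <= 1).
  { eapply Rle_trans. apply ln_diff_le; lra.
    apply (Rmult_le_reg_l y1). lra. unfold Rdiv. rewrite Rmult_comm, Rmult_assoc, Rinv_l; lra. }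
  assert (HD0 : 0 <= ln y2 - ln y1) by (assert (ln y1 <= ln y2) by (apply ln_le; lra); lra).
  apply (F_rat y1 y2 68); auto. nra.
Qed.

Lemma F_far y1 y2 : ee <= y1 -> y1 <= y2 -> y2 <= 3 * y1 -> F y1 <= exp 200 * F y2.
Proof.
  intros H1 H2 H3. pose proof ee_gt.
  assert (HD : ln y2 - ln y1 <= 2).
  { eapply Rle_trans. apply ln_diff_le; lra.
    apply (Rmult_le_reg_l y1). lra. unfold Rdiv. rewrite Rmult_comm, Rmult_assoc, Rinv_l; lra. }
  assert (HD0 : 0 <= ln y2 - ln y1) by (assert (ln y1 <= ln y2) by (apply ln_le; lra); lra).
  apply (F_rat y1 y2 200); auto. nra.
Qed.

Lemma F_le y : ee <= y -> F y <= / (y * y).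
Proof.
  intro H. pose proof ee_gt.
  assert (Hl : 1 <= ln y) by (rewrite <- ln_ee; apply ln_le; lra).
  unfold F, G. pose proof (SIN_bound (32 * ln (ln y))).
  apply Rle_trans with (exp (- (ln y + ln y))).
  apply exp_le. nra.
  rewrite exp_Ropp, exp_plus, exp_ln by lra. lra.
Qed.


Definition Fu (u : R) := F (u + ee).

Lemma Fu_cont u : -1 < u -> continuous Fu u.
Proof.
  intro Hu. pose proof ee_gt. apply (ex_derive_continuous (K:=R_AbsRing) (V:=R_NormedModule)).
  unfold Fu, F, G.
  assert (1 < u + ee) by lra.
  assert (0 < ln (u + ee)) by (rewrite <- ln_1; apply ln_increasing; lra).
  auto_derive. repeat split; lra.
Qed.

Lemma exR_cont (f : R -> R) a b :
  (forall z, Rmin a b <= z <= Rmax a b -> continuous f z) -> ex_RInt f a b.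
Proof. intro H. apply (ex_RInt_continuous (V:=R_CompleteNormedModule)). exact H. Qed.

Lemma Rcont_der (f : R -> R) x : ex_derive f x -> continuous f x.
Proof. apply (ex_derive_continuous (K:=R_AbsRing) (V:=R_NormedModule)). Qed.

Lemma PW (k g1 g2 : R -> R) p :
  (forall u, u < p -> k u = g1 u) -> (forall u, p < u -> k u = g2 u) ->
  (forall a b, a <= b <= p -> ex_RInt g1 a b) ->
  (forall a b, p <= a <= b -> ex_RInt g2 a b) ->
  forall a b, a <= b -> ex_RInt k a b.
Proof.
  intros H1 H2 I1 I2 a b Hab.
  destruct (Rle_or_lt b p).
  - apply ex_RInt_ext with g1. intros x Hx. rewrite Rmin_left, Rmax_right in Hx by lra.
    symmetry; apply H1; lra. apply I1; lra.
  - destruct (Rle_or_lt p a).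
    + apply ex_RInt_ext with g2. intros x Hx. rewrite Rmin_left, Rmax_right in Hx by lra.
      symmetry; apply H2; lra. apply I2; lra.
    + apply ex_RInt_Chasles with p.
      apply ex_RInt_ext with g1. intros x Hx. rewrite Rmin_left, Rmax_right in Hx by lra.
      symmetry; apply H1; lra. apply I1; lra.
      apply ex_RInt_ext with g2. intros x Hx. rewrite Rmin_left, Rmax_right in Hx by lra.
      symmetry; apply H2; lra. apply I2; lra.
Qed.

Lemma exRInt_zero a b : ex_RInt (fun _ : R => 0) a b.
Proof. apply ex_RInt_const. Qed.

Lemma RInt_zero_on (k : R -> R) a b : (forall u, a < u < b -> k u = 0) -> a <= b -> RInt k a b = 0.
Proof.
  intros H Hab. rewrite (RInt_ext k (fun _ => 0)). rewrite RInt_const. unfold scal; simpl.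
  unfold mult; simpl. ring.
  intros x Hx. rewrite Rmin_left, Rmax_right in Hx by lra. apply H; lra.
Qed.

Lemma Fu_ex a b : 0 <= a -> 0 <= b -> ex_RInt Fu a b.
Proof.
  intros. apply exR_cont. intros z Hz. apply Fu_cont.
  assert (0 <= Rmin a b) by (apply Rmin_glb; lra). lra.
Qed.

Definition Fi (b : R) := RInt Fu 0 b.

Lemma Fi_mono b1 b2 : 0 <= b1 <= b2 -> Fi b1 <= Fi b2.
Proof.
  intros H. unfold Fi. rewrite <- (RInt_Chasles Fu 0 b1 b2) by (apply Fu_ex; lra).
  assert (0 <= RInt Fu b1 b2).
  { apply RInt_ge_0. lra. apply Fu_ex; lra. intros; left; apply F_pos. }
  unfold plus; simpl. lra.
Qed.

Lemma Fi_bnd b : 0 <= b -> Fi b <= 1.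
Proof.
  intro Hb. pose proof ee_gt. unfold Fi.
  apply Rle_trans with (RInt (fun u => / ((u + ee) * (u + ee))) 0 b).
  - apply RInt_le; auto. apply Fu_ex; lra.
    apply exR_cont. intros z Hz. rewrite Rmin_left, Rmax_right in Hz by lra.
    apply Rcont_der. auto_derive. nra.
    intros x Hx. apply F_le. lra.
  - assert (RInt (fun u => / ((u + ee) * (u + ee))) 0 b = (- / (b + ee)) - (- / (0 + ee))).
    { apply is_RInt_unique.
      apply (is_RInt_derive (fun u => - / (u + ee))).
      intros x Hx. rewrite Rmin_left, Rmax_right in Hx by lra. auto_derive. lra. field. lra.
      intros x Hx. rewrite Rmin_left, Rmax_right in Hx by lra.
      apply Rcont_der. auto_derive. nra. }
    rewrite H0. assert (0 < / (b + ee)) by (apply Rinv_0_lt_compat; lra).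
    assert (/ (0 + ee) <= 1). { rewrite <- Rinv_1. apply Rinv_le_contravar; lra. }
    lra.
Qed.

Definition EFi (z : R) := exists b, 0 <= b /\ z = Fi b.

Lemma EFi_bound : bound EFi.
Proof. exists 1. intros z [b [Hb ->]]. apply Fi_bnd; auto. Qed.

Lemma EFi_ne : exists z, EFi z.
Proof. exists (Fi 0). exists 0. split; lra. Qed.

Definition I0 : R := proj1_sig (completeness EFi EFi_bound EFi_ne).

Lemma I0_lub : is_lub EFi I0.
Proof. unfold I0. destruct (completeness EFi EFi_bound EFi_ne); auto. Qed.

Lemma Fi_le_I0 b : 0 <= b -> Fi b <= I0.
Proof. intro. apply (proj1 I0_lub). exists b; auto. Qed.

Lemma Fi1_pos : 0 < Fi 1.
Proof.
  unfold Fi. apply RInt_gt_0. lra. intros; apply F_pos.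
  intros; apply Fu_cont; lra.
Qed.

Lemma I0_pos : 0 < I0.
Proof. pose proof Fi1_pos. pose proof (Fi_le_I0 1). lra. Qed.

Lemma I0_tail eps : 0 < eps -> exists b0, 0 <= b0 /\ forall b, b0 <= b -> I0 - eps < Fi b <= I0.
Proof.
  intros He.
  destruct (classic (exists b0, 0 <= b0 /\ I0 - eps < Fi b0)) as [[b0 [Hb0 Hf]]|Hn].
  - exists b0. split; auto. intros b Hb. split.
    pose proof (Fi_mono b0 b). lra. apply Fi_le_I0; lra.
  - exfalso. assert (is_upper_bound EFi (I0 - eps)).
    { intros z [b [Hb ->]]. apply Rnot_lt_le. intro Hc. apply Hn. exists b. auto. }
    pose proof (proj2 I0_lub _ H). lra.
Qed.


Lemma mk_has_int f l : (forall a b, a <= b -> ex_RInt f a b) ->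
  (forall eps, 0 < eps -> exists M, 0 <= M /\ forall a b, a <= -M -> M <= b ->
     Rabs (RInt f a b - l) < eps) -> has_integral f l.
Proof.
  intros H1 H2. split.
  - intros a b Hab. constructor. apply ex_RInt_Reals_0. auto.
  - intros eps He. destruct (H2 eps He) as [M [HM HM2]]. exists M.
    intros a b Ha Hb pr. rewrite <- RInt_Reals. auto.
Qed.

Lemma RInt_scalR (f : R -> R) a b c : ex_RInt f a b ->
  RInt (fun u => c * f u) a b = c * RInt f a b.
Proof. intro H. apply (RInt_scal f a b c H). Qed.

Lemma ex_RInt_scalR (f : R -> R) a b c : ex_RInt f a b -> ex_RInt (fun u => c * f u) a b.
Proof. intro H. apply (ex_RInt_scal f a b c H). Qed.

Lemma RInt_ChaslesR (f : R -> R) a b c : ex_RInt f a b -> ex_RInt f b c ->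
  RInt f a b + RInt f b c = RInt f a c.
Proof. intros. apply (RInt_Chasles f a b c); auto. Qed.

Definition C1 := / I0.
Lemma C1_pos : 0 < C1.
Proof. unfold C1. apply Rinv_0_lt_compat. apply I0_pos. Qed.

Definition p1 (u : R) := if Rle_dec 0 u then C1 * Fu u else 0.

Lemma p1_nonneg u : 0 <= p1 u.
Proof. unfold p1. destruct Rle_dec. pose proof C1_pos. pose proof (F_pos (u + ee)). unfold Fu. nra. lra. Qed.

Lemma p1_pos u : 0 <= u -> p1 u = C1 * F (u + ee).
Proof. intro. unfold p1. destruct Rle_dec; [reflexivity | lra]. Qed.

Lemma p1_neg u : u < 0 -> p1 u = 0.
Proof. intro. unfold p1. destruct Rle_dec; [lra | reflexivity]. Qed.

Lemma CFu_ex a b : 0 <= a -> 0 <= b -> ex_RInt (fun u => C1 * Fu u) a b.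
Proof. intros. apply ex_RInt_scalR. apply Fu_ex; auto. Qed.

Lemma p1_ex a b : a <= b -> ex_RInt p1 a b.
Proof.
  apply (PW p1 (fun _ => 0) (fun u => C1 * Fu u) 0).
  intros; apply p1_neg; auto. intros; unfold p1; destruct Rle_dec; [auto|lra].
  intros; apply exRInt_zero. intros; apply CFu_ex; lra.
Qed.

Lemma p1_int b : 0 <= b -> RInt p1 0 b = C1 * Fi b.
Proof.
  intro Hb. unfold Fi. rewrite <- RInt_scalR by (apply Fu_ex; lra).
  apply RInt_ext. intros x Hx. rewrite Rmin_left, Rmax_right in Hx by lra.
  apply p1_pos. lra.
Qed.

Lemma p1_density : density p1.
Proof.
  split. apply p1_nonneg.
  apply mk_has_int. apply p1_ex.
  intros eps He. pose proof I0_pos. pose proof C1_pos.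
  destruct (I0_tail (eps * I0)) as [b0 [Hb0 Ht]]. nra.
  exists b0. split; auto. intros a b Ha Hb.
  rewrite <- (RInt_ChaslesR p1 a 0 b) by (apply p1_ex; lra).
  rewrite (RInt_zero_on p1 a 0); [| intros u Hu; apply p1_neg; lra | lra].
  rewrite p1_int by lra. destruct (Ht b Hb).
  assert (C1 * I0 = 1) by (unfold C1; field; lra).
  rewrite Rabs_left1 by nra.
  assert (C1 * (eps * I0) = eps) by (unfold C1; field; lra).
  nra.
Qed.


Lemma p1_classL : classL p1.
Proof.
  split. apply p1_nonneg. split.
  { exists 0. intros x Hx. rewrite p1_pos by auto. pose proof C1_pos. pose proof (F_pos (x+ee)). nra. }
  intros a eps He.
  destruct (F_unif (eps / 2) (Rabs a)) as [X [HX0 HX]]. lra. apply Rabs_pos.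
  exists (X + Rabs a). intros x Hx.
  pose proof (Rabs_pos a). pose proof (Rle_abs a). pose proof (Rle_abs (-a)). rewrite Rabs_Ropp in H1.
  rewrite !p1_pos by lra.
  destruct (HX x a) as [Hl Hu]; try lra.
  pose proof C1_pos. pose proof (F_pos (x + ee)).
  replace (x + a + ee) with (x + a + ee) by ring.
  replace (C1 * F (x + a + ee) / (C1 * F (x + ee)) - 1) with ((F (x + a + ee) - F (x + ee)) / F (x + ee)) by (field; lra).
  unfold Rdiv. rewrite Rabs_mult, Rabs_inv, (Rabs_pos_eq (F (x+ee))) by lra.
  apply (Rmult_lt_reg_r (F (x + ee))). lra.
  rewrite Rmult_assoc, Rinv_l, Rmult_1_r by lra.
  apply Rabs_def1; nra.
Qed.


Definition kk (x u : R) := C1 * Fu (x - u) * (C1 * Fu u).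

Lemma kk_ex x a b : 0 <= a <= x -> 0 <= b <= x -> ex_RInt (kk x) a b.
Proof.
  intros Ha Hb. apply exR_cont. intros z Hz.
  assert (0 <= z <= x).
  { split. apply Rle_trans with (Rmin a b); auto. apply Rmin_glb; lra. lra.
    apply Rle_trans with (Rmax a b). lra. apply Rmax_lub; lra. }
  pose proof ee_gt. apply Rcont_der. unfold kk, Fu, F, G.
  assert (1 < x - z + ee) by lra. assert (1 < z + ee) by lra.
  assert (0 < ln (x - z + ee)) by (rewrite <- ln_1; apply ln_increasing; lra).
  assert (0 < ln (z + ee)) by (rewrite <- ln_1; apply ln_increasing; lra).
  replace (x - z + ee) with (x + - z + ee) in * by ring.
  auto_derive. repeat split; lra.
Qed.

Lemma PWlo (k g1 g2 : R -> R) lo p :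
  (forall u, lo < u < p -> k u = g1 u) -> (forall u, p < u -> k u = g2 u) ->
  (forall a b, lo <= a -> a <= b -> b <= p -> ex_RInt g1 a b) ->
  (forall a b, p <= a <= b -> ex_RInt g2 a b) ->
  forall a b, lo <= a -> a <= b -> ex_RInt k a b.
Proof.
  intros H1 H2 I1 I2 a b Hlo Hab.
  destruct (Rle_or_lt b p).
  - apply ex_RInt_ext with g1. intros x Hx. rewrite Rmin_left, Rmax_right in Hx by lra.
    symmetry; apply H1; lra. apply I1; lra.
  - destruct (Rle_or_lt p a).
    + apply ex_RInt_ext with g2. intros x Hx. rewrite Rmin_left, Rmax_right in Hx by lra.
      symmetry; apply H2; lra. apply I2; lra.
    + apply ex_RInt_Chasles with p.
      apply ex_RInt_ext with g1. intros x Hx. rewrite Rmin_left, Rmax_right in Hx by lra.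
      symmetry; apply H1; lra. apply I1; lra.
      apply ex_RInt_ext with g2. intros x Hx. rewrite Rmin_left, Rmax_right in Hx by lra.
      symmetry; apply H2; lra. apply I2; lra.
Qed.

Definition k1 (x u : R) := p1 (x - u) * p1 u.

Lemma k1_eq x u : 0 <= u <= x -> k1 x u = kk x u.
Proof. intros. unfold k1, kk. rewrite !p1_pos by lra. unfold Fu. ring. Qed.

Lemma k1_ex x : 0 <= x -> forall a b, a <= b -> ex_RInt (k1 x) a b.
Proof.
  intro Hx.
  apply (PW (k1 x) (fun _ => 0) (k1 x) 0).
  intros u Hu. unfold k1. rewrite (p1_neg u) by lra. ring. auto.
  intros; apply exRInt_zero.
  intros a b Hab. apply (PWlo (k1 x) (kk x) (fun _ => 0) 0 x).
  intros; apply k1_eq; lra.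
  intros u Hu. unfold k1. rewrite (p1_neg (x - u)) by lra. ring.
  intros; apply kk_ex; lra.
  intros; apply exRInt_zero. lra. lra.
Qed.

Definition h1 (x : R) := RInt (k1 x) 0 x.

Lemma h1_int x : 0 <= x -> has_integral (k1 x) (h1 x).
Proof.
  intro Hx. apply mk_has_int. apply k1_ex; auto.
  intros eps He. exists (x + 1). split. lra. intros a b Ha Hb.
  rewrite <- (RInt_ChaslesR (k1 x) a 0 b) by (apply k1_ex; lra).
  rewrite <- (RInt_ChaslesR (k1 x) 0 x b) by (apply k1_ex; lra).
  rewrite (RInt_zero_on (k1 x) a 0); [| intros u Hu; unfold k1; rewrite (p1_neg u) by lra; ring | lra].
  rewrite (RInt_zero_on (k1 x) x b); [| intros u Hu; unfold k1; rewrite (p1_neg (x - u)) by lra; ring | lra].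
  unfold h1. replace (0 + (RInt (k1 x) 0 x + 0) - RInt (k1 x) 0 x) with 0 by ring.
  rewrite Rabs_R0; lra.
Qed.

Lemma h1_kk x : 0 <= x -> h1 x = RInt (kk x) 0 x.
Proof.
  intro. unfold h1. apply RInt_ext. intros u Hu. rewrite Rmin_left, Rmax_right in Hu by lra.
  apply k1_eq; lra.
Qed.

Lemma kk_sym x : 0 <= x -> RInt (kk x) 0 x = 2 * RInt (kk x) 0 (x / 2).
Proof.
  intro Hx.
  rewrite <- (RInt_ChaslesR (kk x) 0 (x/2) x) by (apply kk_ex; lra).
  assert (H := RInt_comp_lin (kk x) (-1) x 0 (x / 2)).
  replace (-1 * 0 + x) with x in H by ring.
  replace (-1 * (x / 2) + x) with (x / 2) in H by field.
  rewrite (RInt_ext _ (fun y => -1 * kk x y)) in H.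
  2:{ intros y _. unfold scal; simpl; unfold mult; simpl. unfold kk.
      replace (x - (-1 * y + x)) with y by ring. replace (-1 * y + x) with (x - y) by ring. ring. }
  rewrite RInt_scalR in H by (apply kk_ex; lra).
  assert (H2 : RInt (kk x) (x / 2) x = - RInt (kk x) x (x / 2)).
  { rewrite <- (opp_RInt_swap (kk x) x (x/2)). exact eq_refl. apply kk_ex; lra. }
  assert (Hk : ex_RInt (kk x) x (x / 2)) by (apply kk_ex; lra).
  specialize (H Hk). rewrite H2, <- H. match goal with |- ?a = ?b => change (a = b :> R) end. ring.
Qed.


Lemma CFi_int a b : 0 <= a -> 0 <= b -> RInt (fun u => C1 * Fu u) a b = C1 * RInt Fu a b.
Proof. intros. apply RInt_scalR. apply Fu_ex; auto. Qed.

Lemma h1_asym : asym_equiv h1 (fun x => 2 * p1 x).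
Proof.
  intros eps He.
  pose proof I0_pos as HI. pose proof C1_pos as HC.
  assert (HC1 : C1 * I0 = 1) by (unfold C1; field; lra).
  set (e68 := exp 68). assert (He68 : 0 < e68) by apply exp_pos.
  set (em := Rmin eps 1).
  assert (Hem : 0 < em <= 1 /\ em <= eps) by (unfold em; split; [split; [apply Rmin_glb_lt; lra | apply Rmin_r] | apply Rmin_l]).
  set (e1 := em / (2 * (e68 + 3))).
  assert (He1 : 0 < e1) by (unfold e1; apply Rdiv_lt_0_compat; lra).
  assert (He1b : e1 * (e68 + 3) * 2 = em) by (unfold e1; field; lra).
  assert (He1c : e1 < 1).
  { assert (e1 * 1 < e1 * ((e68 + 3) * 2)) by (apply Rmult_lt_compat_l; lra). lra. }
  destruct (I0_tail (e1 * I0)) as [A [HA Ht]]. nra.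
  destruct (F_unif e1 A He1 HA) as [X1 [HX1 HX]].
  exists (X1 + 2 * A + 1). intros x Hx.
  assert (Hx0 : 0 <= x) by lra.
  pose proof ee_gt.
  set (P := F (x + ee)). assert (HP : 0 < P) by apply F_pos.
  set (Q := C1 * P). assert (HQ : 0 < Q) by (unfold Q; nra).
  assert (Hp1 : p1 x = Q) by (rewrite p1_pos; auto).
  rewrite Hp1, h1_kk, kk_sym by auto.
  rewrite <- (RInt_ChaslesR (kk x) 0 A (x/2)) by (apply kk_ex; lra).
  set (a := C1 * Fi A). set (a2 := C1 * Fi (x / 2)).
  assert (Ha : 1 - e1 < a <= 1).
  { destruct (Ht A (Rle_refl A)). unfold a. split; nra. }
  assert (Ha2 : a <= a2 <= 1).
  { destruct (Ht (x/2)). lra. unfold a2, a. split.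
    apply Rmult_le_compat_l; [lra|]. apply Fi_mono; lra. nra. }
  assert (S1l : (1 - e1) * Q * a <= RInt (kk x) 0 A).
  { apply Rle_trans with (RInt (fun u => ((1 - e1) * Q) * (C1 * Fu u)) 0 A).
    right. rewrite RInt_scalR by (apply CFu_ex; lra). rewrite CFi_int by lra.
    unfold a, Fi. ring.
    apply RInt_le. auto. apply ex_RInt_scalR, CFu_ex; lra. apply kk_ex; lra.
    intros u Hu. unfold kk. assert (Hxu : Rabs (- u) <= A) by (rewrite Rabs_left1; lra).
    destruct (HX x (- u) ltac:(lra) Hxu) as [H1 H2].
    replace (x + - u + ee) with (x - u + ee) in * by ring.
    unfold Fu. fold P. unfold Q. pose proof (F_pos (u + ee)).
    assert (0 <= C1 * (C1 * F (u + ee))) by (apply Rmult_le_pos; [lra|]; apply Rmult_le_pos; lra).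
    apply Rle_trans with (((1 - e1) * P) * (C1 * (C1 * F (u + ee)))). right; ring.
    apply Rle_trans with (F (x - u + ee) * (C1 * (C1 * F (u + ee)))).
    apply Rmult_le_compat_r; [lra|unfold P; lra]. right; ring. }
  assert (S1u : RInt (kk x) 0 A <= (1 + e1) * Q * a).
  { apply Rle_trans with (RInt (fun u => ((1 + e1) * Q) * (C1 * Fu u)) 0 A).
    apply RInt_le. auto. apply kk_ex; lra. apply ex_RInt_scalR, CFu_ex; lra.
    intros u Hu. unfold kk. assert (Hxu : Rabs (- u) <= A) by (rewrite Rabs_left1; lra).
    destruct (HX x (- u) ltac:(lra) Hxu) as [H1 H2].
    replace (x + - u + ee) with (x - u + ee) in * by ring.
    unfold Fu. fold P. unfold Q. pose proof (F_pos (u + ee)).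
    assert (0 <= C1 * (C1 * F (u + ee))) by (apply Rmult_le_pos; [lra|]; apply Rmult_le_pos; lra).
    apply Rle_trans with (F (x - u + ee) * (C1 * (C1 * F (u + ee)))). right; ring.
    apply Rle_trans with (((1 + e1) * P) * (C1 * (C1 * F (u + ee)))).
    apply Rmult_le_compat_r; [lra|unfold P; lra]. right; ring.
    right. rewrite RInt_scalR by (apply CFu_ex; lra). rewrite CFi_int by lra.
    unfold a, Fi. ring. }
  assert (S2l : 0 <= RInt (kk x) A (x / 2)).
  { apply RInt_ge_0. lra. apply kk_ex; lra. intros u Hu. unfold kk.
    pose proof (F_pos (x - u + ee)). pose proof (F_pos (u + ee)). unfold Fu.
    apply Rmult_le_pos; apply Rmult_le_pos; lra. }
  assert (S2u : RInt (kk x) A (x / 2) <= e68 * Q * (a2 - a)).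
  { apply Rle_trans with (RInt (fun u => (e68 * Q) * (C1 * Fu u)) A (x / 2)).
    apply RInt_le. lra. apply kk_ex; lra. apply ex_RInt_scalR, CFu_ex; lra.
    intros u Hu. unfold kk.
    assert (Fu (x - u) <= e68 * P).
    { unfold Fu, P, e68. apply F_dom; lra. }
    pose proof (F_pos (u + ee)). unfold Fu in *. unfold Q.
    assert (0 <= C1 * (C1 * F (u + ee))) by (apply Rmult_le_pos; [lra|]; apply Rmult_le_pos; lra).
    apply Rle_trans with (F (x - u + ee) * (C1 * (C1 * F (u + ee)))). right; ring.
    apply Rle_trans with ((e68 * P) * (C1 * (C1 * F (u + ee)))).
    apply Rmult_le_compat_r; lra. right; ring.
    right. rewrite RInt_scalR by (apply CFu_ex; lra). rewrite CFi_int by lra.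
    unfold a2, a, Fi.
    rewrite <- (RInt_ChaslesR Fu 0 A (x/2)) by (apply Fu_ex; lra). ring. }
  set (S := RInt (kk x) 0 A + RInt (kk x) A (x / 2)).
  assert (HS1 : (1 - e1) * (1 - e1) * Q <= S).
  { unfold S. assert ((1 - e1) * (1 - e1) * Q <= (1 - e1) * Q * a).
    { assert (0 <= (1 - e1) * Q) by (apply Rmult_le_pos; lra).
      replace ((1 - e1) * (1 - e1) * Q) with (((1 - e1) * Q) * (1 - e1)) by ring.
      apply Rmult_le_compat_l; lra. }
    lra. }
  assert (HS2 : S <= (1 + e1) * Q + e68 * Q * e1).
  { unfold S. assert ((1 + e1) * Q * a <= (1 + e1) * Q * 1) by (apply Rmult_le_compat_l; [apply Rmult_le_pos|]; lra).
    assert (e68 * Q * (a2 - a) <= e68 * Q * e1) by (apply Rmult_le_compat_l; [apply Rmult_le_pos|]; lra).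
    lra. }
  replace (2 * S / (2 * Q) - 1) with ((S - Q) / Q) by (field; lra).
  unfold Rdiv. rewrite Rabs_mult, Rabs_inv, (Rabs_pos_eq Q) by lra.
  apply (Rmult_lt_reg_r Q). lra. rewrite Rmult_assoc, Rinv_l, Rmult_1_r by lra.
  assert (Hk1 : e1 * (1 + e68) < eps).
  { assert (e1 * (1 + e68) < e1 * ((e68 + 3) * 2)) by (apply Rmult_lt_compat_l; lra). lra. }
  assert (Hk2 : 2 * e1 < eps).
  { assert (e1 * 2 < e1 * ((e68 + 3) * 2)) by (apply Rmult_lt_compat_l; lra). lra. }
  assert (Hq1 : e1 * (1 + e68) * Q < eps * Q) by (apply Rmult_lt_compat_r; lra).
  assert (Hq2 : 2 * e1 * Q < eps * Q) by (apply Rmult_lt_compat_r; lra).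
  assert (Hq3 : 0 <= e1 * e1 * Q) by (apply Rmult_le_pos; [apply Rmult_le_pos|]; lra).
  apply Rabs_def1.
  - apply Rle_lt_trans with (e1 * (1 + e68) * Q). lra. lra.
  - apply Rlt_le_trans with (- (2 * e1 * Q)). lra. 
    assert (Hid : (1 - e1) * (1 - e1) * Q - Q = - (2 * e1 * Q) + e1 * e1 * Q) by ring.
    lra.
Qed.


Ltac req := match goal with |- ?a = ?b => change (a = b :> R) end.

Definition q0 (u : R) := / 2 * / ((1 - u) * (1 - u)).
Definition p2 (u : R) := if Rle_dec 0 u then / 2 * (C1 * Fu u) else q0 u.

Lemma p2_pos u : 0 <= u -> p2 u = / 2 * (C1 * F (u + ee)).
Proof. intro. unfold p2. destruct Rle_dec; [reflexivity|lra]. Qed.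
Lemma p2_neg u : u < 0 -> p2 u = q0 u.
Proof. intro. unfold p2. destruct Rle_dec; [lra|reflexivity]. Qed.

Lemma q0_pos u : u < 1 -> 0 < q0 u.
Proof. intro. unfold q0. apply Rmult_lt_0_compat. lra. apply Rinv_0_lt_compat. nra. Qed.

Lemma p2_nonneg u : 0 <= p2 u.
Proof.
  unfold p2. destruct Rle_dec. pose proof C1_pos. pose proof (F_pos (u + ee)). unfold Fu.
  apply Rmult_le_pos; [lra|]. apply Rmult_le_pos; lra.
  left; apply q0_pos; lra.
Qed.

Lemma q0_int a : a <= 0 -> RInt q0 a 0 = / 2 * (1 - / (1 - a)).
Proof.
  intro Ha.
  assert (H : RInt q0 a 0 = (/ 2 * / (1 - 0)) - (/ 2 * / (1 - a))).
  { apply is_RInt_unique. apply (is_RInt_derive (fun u => / 2 * / (1 - u))).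
    intros x Hx. rewrite Rmin_left, Rmax_right in Hx by lra. unfold q0. auto_derive. lra. field. lra.
    intros x Hx. rewrite Rmin_left, Rmax_right in Hx by lra. unfold q0.
    apply Rcont_der. auto_derive. nra. }
  rewrite H. req. field. lra.
Qed.

Lemma q0_ex a b : a <= b -> b <= 0 -> ex_RInt q0 a b.
Proof.
  intros Ha Hb. apply exR_cont. intros z Hz. rewrite Rmin_left, Rmax_right in Hz by lra.
  apply Rcont_der. unfold q0. auto_derive. nra.
Qed.

Lemma p2_ex a b : a <= b -> ex_RInt p2 a b.
Proof.
  apply (PW p2 q0 (fun u => / 2 * (C1 * Fu u)) 0).
  intros; apply p2_neg; auto. intros; unfold p2; destruct Rle_dec; [auto|lra].
  intros; apply q0_ex; lra. intros; apply ex_RInt_scalR, CFu_ex; lra.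
Qed.

Lemma p2_density : density p2.
Proof.
  split. apply p2_nonneg.
  apply mk_has_int. apply p2_ex.
  intros eps He. pose proof I0_pos. pose proof C1_pos.
  assert (HC1 : C1 * I0 = 1) by (unfold C1; field; lra).
  destruct (I0_tail (eps * I0)) as [b0 [Hb0 Ht]]. nra.
  exists (Rmax b0 (/ eps)). split. apply Rle_trans with b0; [lra|apply Rmax_l].
  intros a b Ha Hb.
  assert (Hb' : b0 <= b) by (apply Rle_trans with (Rmax b0 (/ eps)); [apply Rmax_l|lra]).
  assert (Ha' : a <= - / eps) by (apply Rle_trans with (- Rmax b0 (/ eps)); [lra|]; apply Ropp_le_contravar, Rmax_r).
  assert (Hie : 0 < / eps) by (apply Rinv_0_lt_compat; lra).
  rewrite <- (RInt_ChaslesR p2 a 0 b) by (apply p2_ex; lra).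
  rewrite (RInt_ext p2 q0 a 0). 2:{ intros x Hx. rewrite Rmin_left, Rmax_right in Hx by lra. apply p2_neg; lra. }
  rewrite q0_int by lra.
  rewrite (RInt_ext p2 (fun u => / 2 * (C1 * Fu u)) 0 b). 2:{ intros x Hx. rewrite Rmin_left, Rmax_right in Hx by lra. unfold p2; destruct Rle_dec; [auto|lra]. }
  rewrite RInt_scalR by (apply CFu_ex; lra). rewrite CFi_int by lra. fold (Fi b).
  destruct (Ht b Hb').
  assert (Hq1 : 0 < / (1 - a)) by (apply Rinv_0_lt_compat; lra).
  assert (Hq2 : / (1 - a) < eps).
  { rewrite <- (Rinv_inv eps). apply Rinv_lt_contravar. nra. lra. }
  assert (Hq3 : 1 - eps < C1 * Fi b <= 1).
  { split. assert (H4 : C1 * (I0 - eps * I0) < C1 * Fi b) by (apply Rmult_lt_compat_l; lra).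
    replace (C1 * (I0 - eps * I0)) with (1 - eps) in H4 by (unfold C1; field; lra). lra.
    assert (C1 * Fi b <= C1 * I0) by (apply Rmult_le_compat_l; lra). lra. }
  apply Rabs_def1; lra.
Qed.

Lemma p2_equiv : asym_equiv p2 (fun x => / 2 * p1 x).
Proof.
  intros eps He. exists 0. intros x Hx. rewrite p2_pos, p1_pos by auto.
  pose proof C1_pos. pose proof (F_pos (x + ee)).
  replace (/ 2 * (C1 * F (x + ee)) / (/ 2 * (C1 * F (x + ee))) - 1) with 0 by (field; lra).
  rewrite Rabs_R0. auto.
Qed.


Lemma HI_ex f l : has_integral f l -> forall a b, a <= b -> ex_RInt f a b.
Proof. intros [H _] a b Hab. destruct (H a b Hab) as [pr]. apply ex_RInt_Reals_1. exact pr. Qed.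

Lemma HI_ge f l al be : has_integral f l -> (forall u, 0 <= f u) -> al <= be ->
  RInt f al be <= l.
Proof.
  intros Hf Hpos Hab. apply Rnot_lt_le. intro Hc.
  destruct Hf as [Hl Hi].
  assert (Hex : forall a b, a <= b -> ex_RInt f a b) by (apply HI_ex with l; split; auto).
  destruct (Hi (RInt f al be - l)) as [M HM]. lra.
  set (a := Rmin al (- Rabs M)). set (b := Rmax be (Rabs M)).
  assert (Ha1 : a <= al) by apply Rmin_l. assert (Ha2 : a <= - Rabs M) by apply Rmin_r.
  assert (Hb1 : be <= b) by apply Rmax_l. assert (Hb2 : Rabs M <= b) by apply Rmax_r.
  pose proof (Rle_abs M). pose proof (Rle_abs (-M)). rewrite Rabs_Ropp in H0.
  destruct (Hl a b ltac:(lra)) as [pr].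
  specialize (HM a b ltac:(lra) ltac:(lra) pr).
  rewrite <- RInt_Reals in HM.
  rewrite <- (RInt_ChaslesR f a al b) in HM by (apply Hex; lra).
  rewrite <- (RInt_ChaslesR f al be b) in HM by (apply Hex; lra).
  assert (0 <= RInt f a al) by (apply RInt_ge_0; auto; apply Hex; lra).
  assert (0 <= RInt f be b) by (apply RInt_ge_0; auto; apply Hex; lra).
  apply Rabs_def2 in HM. lra.
Qed.

Lemma sin_k (k : nat) : sin (PI / 2 + 2 * INR k * PI) = 1.
Proof. rewrite sin_period. apply sin_PI2. Qed.

Lemma exp_PI32 : exp (PI / 32) <= 8 / 7.
Proof.
  pose proof (exp_ge (PI / 32)). pose proof PI_4. pose proof PI_RGT_0.
  assert (exp (PI / 32) = / exp (- (PI / 32))) by (rewrite exp_Ropp, Rinv_inv; auto).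
  rewrite H2. replace (8/7) with (/ (7/8)) by field.
  apply Rinv_le_contravar. lra. lra.
Qed.


Lemma not_Sd_p2 : ~ Sd p2.
Proof.
  intros [_ [X [h [Hh Has]]]].
  destruct (Has 1) as [M1 HM1]. lra.
  pose proof PI_RGT_0 as HPI. pose proof ee_gt as Hee. pose proof exp_le_3 as He3. fold ee in He3.
  set (B := Rmax 476 (Rmax X M1 + 3)).
  assert (HB1 : 476 <= B) by apply Rmax_l.
  assert (HB2 : Rmax X M1 + 3 <= B) by apply Rmax_r.
  pose proof (Rmax_l X M1). pose proof (Rmax_r X M1).
  destruct (INR_archimed (PI / 16) B) as [k Hk]. lra.
  set (s := (PI / 2 + 2 * INR k * PI) / 32).
  assert (Hs : B < s) by (unfold s; lra).
  set (L := exp s).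
  assert (HL : B < L) by (unfold L; pose proof (exp_ineq1_le s); lra).
  set (yx := exp L).
  assert (Hyx : L + 1 <= yx) by (unfold yx; pose proof (exp_ineq1_le L); lra).
  set (x := yx - ee).
  assert (Hx1 : X <= x) by (unfold x; lra).
  assert (Hx2 : M1 <= x) by (unfold x; lra).
  assert (Hx0 : 0 <= x) by (unfold x; lra).
  set (lY := exp (s + PI / 32)).
  assert (HlY : lY = L * exp (PI / 32)) by (unfold lY, L; apply exp_plus).
  pose proof exp_PI32 as HP32.
  assert (HP1 : 1 <= exp (PI / 32)) by (pose proof (exp_ineq1_le (PI/32)); lra).
  assert (HlY1 : L <= lY) by (rewrite HlY; nra).
  assert (HlY2 : lY <= 8 / 7 * L) by (rewrite HlY; nra).
  set (Y := exp lY).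
  assert (HYyx : yx <= Y) by (unfold Y, yx; apply exp_le; auto).
  assert (HY1 : 1 <= Y) by lra.
  assert (Hs32 : 32 * s = PI / 2 + 2 * INR k * PI) by (unfold s; field).
  assert (HGx : F yx = exp (- (4 * L))).
  { unfold F, G, yx. rewrite ln_exp. unfold L at 1. rewrite ln_exp, Hs32, sin_k.
    f_equal. fold L. ring. }
  assert (HGY : F Y = exp (- (2 * lY))).
  { unfold F, G, Y. rewrite ln_exp. unfold lY at 1. rewrite ln_exp.
    replace (32 * (s + PI / 32)) with (PI / 2 + 2 * INR k * PI + PI) by (rewrite <- Hs32; field).
    rewrite neg_sin, sin_k. f_equal. fold lY. ring. }
  assert (Hp2x : p2 x = / 2 * (C1 * exp (- (4 * L)))).
  { rewrite p2_pos by auto. unfold x. replace (yx - ee + ee) with yx by ring. rewrite HGx. auto. }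
  pose proof C1_pos as HC.
  assert (Hp2xpos : 0 < p2 x) by (rewrite Hp2x; pose proof (exp_pos (- (4 * L))); nra).
  assert (Hup : h x < 4 * p2 x).
  { specialize (HM1 x Hx2). apply Rabs_def2 in HM1. destruct HM1 as [Hm1 _].
    assert (h x / (2 * p2 x) < 2) by lra.
    apply (Rmult_lt_compat_r (2 * p2 x)) in H1; [|lra].
    unfold Rdiv in H1. rewrite Rmult_assoc, Rinv_l, Rmult_1_r in H1 by lra. lra. }
  set (e200 := exp 200). assert (He200 : 0 < e200) by apply exp_pos.
  set (cl := (/ 2 * (C1 * (F Y / e200))) * (/ 2 * / (9 * Y * Y))).
  assert (Hlow : Y * cl <= h x).
  { apply Rle_trans with (RInt (fun u => p2 (x - u) * p2 u) (- 2 * Y) (- Y)).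
    - apply Rle_trans with (RInt (fun _ => cl) (- 2 * Y) (- Y)).
      right. rewrite RInt_const. unfold scal; simpl; unfold mult; simpl. ring.
      apply RInt_le. lra. apply ex_RInt_const. apply (HI_ex _ _ (Hh x Hx1)). lra.
      intros u Hu. rewrite p2_pos by lra. rewrite p2_neg by lra. unfold q0, cl.
      assert (HF : F Y <= e200 * F (x - u + ee)).
      { apply F_far; unfold x; lra. }
      assert (HF2 : F Y / e200 <= F (x - u + ee)).
      { unfold Rdiv. apply (Rmult_le_reg_l e200). lra. rewrite <- Rmult_assoc, (Rmult_comm e200), Rmult_assoc, Rinv_r, Rmult_1_r by lra. lra. }
      assert (HQ : / (9 * Y * Y) <= / ((1 - u) * (1 - u))).
      { apply Rinv_le_contravar. nra. nra. }
      assert (0 <= F Y / e200) by (unfold Rdiv; pose proof (F_pos Y); apply Rmult_le_pos; [lra|]; left; apply Rinv_0_lt_compat; lra).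
      assert (0 <= / (9 * Y * Y)) by (left; apply Rinv_0_lt_compat; nra).
      apply Rmult_le_compat.
      apply Rmult_le_pos; [lra|]. apply Rmult_le_pos; lra.
      apply Rmult_le_pos; lra.
      apply Rmult_le_compat_l; [lra|]. apply Rmult_le_compat_l; lra.
      apply Rmult_le_compat_l; lra.
    - apply (HI_ge _ _ _ _ (Hh x Hx1)). intros; apply Rmult_le_pos; apply p2_nonneg. lra. }
  assert (HYcl : Y * cl = C1 / (36 * e200) * (F Y / Y)) by (unfold cl; field; lra).
  assert (HFY : F Y / Y = exp (- (3 * lY))).
  { rewrite HGY. unfold Y. unfold Rdiv. rewrite <- exp_Ropp, <- exp_plus. f_equal. ring. }
  assert (Hbig : 72 * e200 * exp (- (4 * L)) <= exp (- (3 * lY))).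
  { assert (H72 : 72 <= exp 72) by (pose proof (exp_ineq1_le 72); lra).
    apply Rle_trans with (exp 72 * e200 * exp (- (4 * L))).
    apply Rmult_le_compat_r; [left; apply exp_pos|]. apply Rmult_le_compat_r; lra.
    unfold e200. rewrite <- !exp_plus. apply exp_le. lra. }
  rewrite HYcl, HFY in Hlow. rewrite Hp2x in Hup.
  assert (C1 / (36 * e200) * (72 * e200 * exp (- (4 * L))) <= C1 / (36 * e200) * exp (- (3 * lY))).
  { apply Rmult_le_compat_l; auto. unfold Rdiv. apply Rmult_le_pos; [lra|]. left; apply Rinv_0_lt_compat; lra. }
  replace (C1 / (36 * e200) * (72 * e200 * exp (- (4 * L)))) with (4 * (/ 2 * (C1 * exp (- (4 * L))))) in H1 by (field; lra).
  lra.
Qed.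

Theorem theorem1p2 :
  exists (p1 p2 : R -> R) (c : R),
    0 < c /\ density p1 /\ density p2 /\
    Sd p1 /\ ~ Sd p2 /\
    asym_equiv p2 (fun x => c * p1 x).
Proof.
  exists p1, p2, (/ 2). split. lra. split. apply p1_density. split. apply p2_density.
  split.
  - split. split. apply p1_density. apply p1_classL.
    exists 0, h1. split. intros x Hx. apply h1_int; auto. apply h1_asym.
  - split. apply not_Sd_p2. apply p2_equiv.
Qed.
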